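(* Assume $h_1=0$. Let $\nu$ range over Borel probability measures on $D$. Then $$\min_{\nu}\frac{\big(\int_D h_0\mu\,\nu(d\mu\,d\sigma)\big)^2}{\int_D(\mu^2+\sigma^2)\,\nu(d\mu\,d\sigma)}=\begin{cases}\dfrac{h_0^2\mu_-^2}{\mu_-^2+\sigma_+^2},&\text{if } \mu_+\mu_--2\sigma_+^2\le\mu_-^2,\\[2mm] \dfrac{\mu_+\mu_--\sigma_+^2}{\mu_M^2}\,h_0^2,&\text{if } \mu_-^2<\mu_+\mu_--2\sigma_+^2.\end{cases}$$ The unique minimizer $\pi^*$ of $\pi\mapsto\max_{(\mu,\sigma)\in D}F(\pi,\mu,\sigma)$ is $$\pi^*=\begin{cases}\dfrac{h_0\mu_-}{\mu_-^2+\sigma_+^2},&\text{if } \mu_+\mu_--2\sigma_+^2\le\mu_-^2,\\[2mm] \dfrac{h_0}{\mu_M},&\text{if } \mu_-^2<\mu_+\mu_--2\sigma_+^2.\end{cases}$$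
   Context: Let $0<\mu_-<\mu_+$ and $0<\sigma_-<\sigma_+$ be real numbers, $D=[\mu_-,\mu_+]\times[\sigma_-,\sigma_+]$, and $h_0,h_1\in\mathbb R$. For $\pi\in\mathbb R$ and $(\mu,\sigma)\in D$ put $F(\pi,\mu,\sigma)=(h_0-\pi\mu)^2+(h_1-\pi\sigma)^2$. Write $\mu_M=(\mu_++\mu_-)/2$. *)

(* Defs.v *)
From Stdlib Require Import Reals Lra.
Open Scope R_scope.

Definition pt := (R * R)%type.
Definition pset := pt -> Prop.

Definition Dset (mum mup sm sp : R) : pset :=
  fun p => mum <= fst p <= mup /\ sm <= snd p <= sp.

Definition F (h0 h1 pi mu sigma : R) : R :=
  (h0 - pi * mu) ^ 2 + (h1 - pi * sigma) ^ 2.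

Definition is_open2 (U : pset) : Prop :=
  forall x, U x -> exists eps, 0 < eps /\
    forall y, (fst y - fst x) ^ 2 + (snd y - snd x) ^ 2 < eps ^ 2 -> U y.

Definition sigma_algebra (S : pset -> Prop) : Prop :=
  S (fun _ => True) /\
  (forall A, S A -> S (fun x => ~ A x)) /\
  (forall A : nat -> pset, (forall n, S (A n)) -> S (fun x => exists n, A n x)).

Definition Borel (A : pset) : Prop :=
  forall S, sigma_algebra S -> (forall U, is_open2 U -> S U) -> S A.

Definition disjoint_family (A : nat -> pset) : Prop :=
  forall m n x, m <> n -> A m x -> A n x -> False.

(* nu is a Borel probability measure on the set D (a Borel measure on R^2
   giving full mass to D); its values on non-Borel sets are irrelevant. *)
Definition borel_prob_on (D : pset) (nu : pset -> R) : Prop :=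
  (forall A, Borel A -> 0 <= nu A) /\
  nu D = 1 /\
  (forall A : nat -> pset, (forall n, Borel (A n)) -> disjoint_family A ->
     infinite_sum (fun n => nu (A n)) (nu (fun x => exists n, A n x))).

Fixpoint rsum (n : nat) (g : nat -> R) : R :=
  match n with
  | O => 0
  | S k => rsum k g + g k
  end.

Definition simple_below (D : pset) (nu : pset -> R) (f : pt -> R) (v : R) : Prop :=
  exists (n : nat) (A : nat -> pset) (c : nat -> R),
    (forall i, (i < n)%nat ->
       Borel (A i) /\ 0 <= c i /\ forall x, A i x -> D x /\ c i <= f x) /\
    (forall i j x, (i < n)%nat -> (j < n)%nat -> i <> j -> A i x -> A j x -> False) /\
    v = rsum n (fun i => c i * nu (A i)).

(* I is the (Lebesgue) integral over D of f with respect to nu: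
   integral of f^+ minus integral of f^-, each defined as the supremum of
   integrals of nonnegative simple functions below it. *)
Definition is_integral (D : pset) (nu : pset -> R) (f : pt -> R) (I : R) : Prop :=
  exists Ip In,
    is_lub (simple_below D nu (fun x => Rmax (f x) 0)) Ip /\
    is_lub (simple_below D nu (fun x => Rmax (- f x) 0)) In /\
    I = Ip - In.

Definition is_max_F (D : pset) (h0 h1 pi m : R) : Prop :=
  (exists p, D p /\ F h0 h1 pi (fst p) (snd p) = m) /\
  (forall p, D p -> F h0 h1 pi (fst p) (snd p) <= m).

(* Main.v *)
Require Import Defs.
From Stdlib Require Import Reals Lra Lia Psatz ClassicalEpsilon FunctionalExtensionality PropExtensionality.
Open Scope R_scope.

Lemma pset_ext (A B : pset) : (forall x, A x <-> B x) -> A = B.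
Proof. intros H; apply functional_extensionality; intro x; apply propositional_extensionality; auto. Qed.

Lemma Borel_open U : is_open2 U -> Borel U.
Proof. intros HU S _ HS; auto. Qed.

Lemma Borel_compl A : Borel A -> Borel (fun x => ~ A x).
Proof. intros HA S HS HO. pose proof HS as [_ [Hc _]]. apply Hc. apply HA; auto. Qed.

Lemma Borel_union (A : nat -> pset) : (forall n, Borel (A n)) -> Borel (fun x => exists n, A n x).
Proof. intros HA S HS HO. pose proof HS as [_ [_ Hu]]. apply Hu. intro n; apply HA; auto. Qed.

Lemma Borel_True : Borel (fun _ => True).
Proof. intros S HS _. apply HS. Qed.

Lemma Borel_empty : Borel (fun _ => False).
Proof.
  replace (fun _ : pt => False) with (fun x : pt => ~ (fun _ : pt => True) x).
  - apply Borel_compl, Borel_True.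
  - apply pset_ext; intro x; simpl; tauto.
Qed.

Lemma Borel_inter A B : Borel A -> Borel B -> Borel (fun x => A x /\ B x).
Proof.
  intros HA HB.
  set (C := fun n : nat => match n with O => (fun x => ~ A x) | _ => (fun x => ~ B x) end).
  replace (fun x => A x /\ B x) with (fun x => ~ (fun x => exists n, C n x) x).
  - apply Borel_compl, Borel_union. intros [|n]; simpl; apply Borel_compl; auto.
  - apply pset_ext; intro x; simpl; split.
    + intro H. split; apply NNPP; intro H'; apply H; [exists O|exists 1%nat]; simpl; auto.
    + intros [H1 H2] [[|n] Hn]; simpl in Hn; auto.
Qed.

Lemma Borel_closed A : is_open2 (fun x => ~ A x) -> Borel A.
Proof.
  intro H. replace A with (fun x => ~ (fun x => ~ A x) x).
  - apply Borel_compl, Borel_open, H.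
  - apply pset_ext; intro x; simpl; split; [apply NNPP | tauto].
Qed.

Lemma coord_close (x y : pt) eps : 0 < eps ->
  (fst y - fst x) ^ 2 + (snd y - snd x) ^ 2 < eps ^ 2 ->
  Rabs (fst y - fst x) < eps /\ Rabs (snd y - snd x) < eps.
Proof.
  intros He H. set (a := fst y - fst x) in *. set (b := snd y - snd x) in *.
  assert (Ha : a^2 < eps^2) by nra. assert (Hb : b^2 < eps^2) by nra.
  split; apply Rabs_def1; nra.
Qed.

Lemma Borel_D mum mup sm sp : Borel (Dset mum mup sm sp).
Proof.
  apply Borel_closed. intros x Hx. unfold Dset in Hx.
  destruct (Rlt_dec (fst x) mum) as [H1|H1].
  { exists (mum - fst x); split; [lra|]. intros y Hy.
    destruct (coord_close x y (mum - fst x) ltac:(lra) Hy) as [Ha _].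
    unfold Dset; intros [[? ?] ?]. apply Rabs_def2 in Ha. lra. }
  destruct (Rlt_dec mup (fst x)) as [H2|H2].
  { exists (fst x - mup); split; [lra|]. intros y Hy.
    destruct (coord_close x y (fst x - mup) ltac:(lra) Hy) as [Ha _].
    unfold Dset; intros [[? ?] ?]. apply Rabs_def2 in Ha. lra. }
  destruct (Rlt_dec (snd x) sm) as [H3|H3].
  { exists (sm - snd x); split; [lra|]. intros y Hy.
    destruct (coord_close x y (sm - snd x) ltac:(lra) Hy) as [_ Ha].
    unfold Dset; intros [? [? ?]]. apply Rabs_def2 in Ha. lra. }
  destruct (Rlt_dec sp (snd x)) as [H4|H4].
  { exists (snd x - sp); split; [lra|]. intros y Hy.
    destruct (coord_close x y (snd x - sp) ltac:(lra) Hy) as [_ Ha].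
    unfold Dset; intros [? [? ?]]. apply Rabs_def2 in Ha. lra. }
  exfalso; apply Hx; lra.
Qed.

Lemma Borel_single (p : pt) : Borel (fun x => x = p).
Proof.
  apply Borel_closed. intros x Hx.
  destruct (Req_dec (fst x) (fst p)) as [E1|E1].
  - assert (E2 : snd x <> snd p).
    { intro E2; apply Hx. destruct x, p; simpl in *; subst; auto. }
    exists (Rabs (snd x - snd p)); split; [apply Rabs_pos_lt; lra|].
    intros y Hy E; subst y.
    destruct (coord_close x p (Rabs (snd x - snd p)) ltac:(apply Rabs_pos_lt; lra) Hy) as [_ Ha].
    rewrite Rabs_minus_sym in Ha; lra.
  - exists (Rabs (fst x - fst p)); split; [apply Rabs_pos_lt; lra|].
    intros y Hy E; subst y.
    destruct (coord_close x p (Rabs (fst x - fst p)) ltac:(apply Rabs_pos_lt; lra) Hy) as [Ha _].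
    rewrite Rabs_minus_sym in Ha; lra.
Qed.

Lemma rsum_ext n f g : (forall i, (i < n)%nat -> f i = g i) -> rsum n f = rsum n g.
Proof. induction n; simpl; intros H; auto. rewrite IHn by (intros; apply H; lia). rewrite H by lia; auto. Qed.

Lemma rsum_le n f g : (forall i, (i < n)%nat -> f i <= g i) -> rsum n f <= rsum n g.
Proof. induction n; simpl; intros H; [lra|]. pose proof (H n ltac:(lia)). pose proof (IHn ltac:(intros; apply H; lia)). lra. Qed.

Lemma rsum_plus n f g : rsum n (fun i => f i + g i) = rsum n f + rsum n g.
Proof. induction n; simpl; [lra|]. rewrite IHn; ring. Qed.

Lemma rsum_scal n k f : rsum n (fun i => k * f i) = k * rsum n f.
Proof. induction n; simpl; [lra|]. rewrite IHn; ring. Qed.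

Lemma sum_f_rsum s n : sum_f_R0 s n = rsum (S n) s.
Proof. induction n; simpl; [lra|]. rewrite IHn; simpl; ring. Qed.

Lemma lim_const s l N c : infinite_sum s l ->
  (forall n, (n >= N)%nat -> sum_f_R0 s n = c) -> l = c.
Proof.
  intros Hs Hc. destruct (Req_dec l c) as [|Hne]; auto.
  destruct (Hs (Rabs (l - c))) as [N' HN'].
  { apply Rlt_gt, Rabs_pos_lt; lra. }
  specialize (HN' (max N N') ltac:(lia)). rewrite Hc in HN' by lia.
  unfold Rdist in HN'. rewrite Rabs_minus_sym in HN'. lra.
Qed.

Lemma rsum_tail N f m : (forall k, (k >= N)%nat -> f k = 0) -> (m >= N)%nat -> rsum m f = rsum N f.
Proof.
  intros Hf Hm. induction m.
  - assert (N = 0%nat) by lia; subst; auto.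
  - destruct (Nat.eq_dec (S m) N) as [E|E]; [subst; auto|].
    simpl. rewrite IHm by lia. rewrite Hf by lia. ring.
Qed.

Lemma nu_empty D nu : borel_prob_on D nu -> nu (fun _ => False) = 0.
Proof.
  intros [_ [_ Hadd]].
  specialize (Hadd (fun _ => fun _ => False) (fun _ => Borel_empty)).
  assert (Hd : disjoint_family (fun _ : nat => fun _ : pt => False)) by (intros m n x _ H; auto).
  specialize (Hadd Hd). cbv beta in Hadd.
  replace (fun x : pt => exists _ : nat, False) with (fun _ : pt => False) in Hadd
    by (apply pset_ext; intro x; split; [tauto| intros [_ H]; auto]).
  set (c := nu (fun _ => False)) in *.
  destruct (Req_dec c 0) as [|Hne]; auto. exfalso.
  destruct (Hadd (Rabs c / 3)) as [N HN]. { apply Rlt_gt. pose proof (Rabs_pos_lt c Hne). lra. }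
  pose proof (HN N ltac:(lia)) as H1. pose proof (HN (S N) ltac:(lia)) as H2.
  simpl in H2. unfold Rdist in H1, H2.
  set (Sm := sum_f_R0 (fun _ : nat => c) N) in *.
  destruct (Rcase_abs c) as [Hc|Hc].
  - rewrite (Rabs_left c Hc) in *.
    apply Rabs_def2 in H1. apply Rabs_def2 in H2. destruct H1, H2. lra.
  - rewrite (Rabs_right c Hc) in *.
    apply Rabs_def2 in H1. apply Rabs_def2 in H2. destruct H1, H2. lra.
Qed.

Lemma Borel_fin_union n (A : nat -> pset) : (forall i, (i < n)%nat -> Borel (A i)) ->
  Borel (fun x => exists i, (i < n)%nat /\ A i x).
Proof.
  intros HA. apply (Borel_union (fun k x => (k < n)%nat /\ A k x)).
  intro k. destruct (Compare_dec.lt_dec k n) as [Hk|Hk].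
  - replace (fun x => (k < n)%nat /\ A k x) with (A k) by (apply pset_ext; intro; tauto). auto.
  - replace (fun x => (k < n)%nat /\ A k x) with (fun _ : pt => False) by (apply pset_ext; intro; tauto).
    apply Borel_empty.
Qed.

Lemma partition D nu n (A : nat -> pset) : borel_prob_on D nu -> Borel D ->
  (forall i, (i < n)%nat -> Borel (A i) /\ forall x, A i x -> D x) ->
  (forall i j x, (i < n)%nat -> (j < n)%nat -> i <> j -> A i x -> A j x -> False) ->
  let R := fun x => D x /\ ~ (exists i, (i < n)%nat /\ A i x) in
  Borel R /\ 0 <= nu R /\ rsum n (fun i => nu (A i)) + nu R = 1.
Proof.
  intros Hnu HD HA Hdis R.
  assert (HR : Borel R).
  { apply Borel_inter; auto. apply Borel_compl, Borel_fin_union. intros; apply HA; auto. }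
  pose proof Hnu as [Hpos [H1 Hadd]].
  split; [auto|split; [auto|]].
  set (B := fun k x => ((k < n)%nat /\ A k x) \/ (k = n /\ R x)).
  assert (EB1 : forall k, (k < n)%nat -> B k = A k).
  { intros k Hk; apply pset_ext; intro x; unfold B; split; [intros [[_ ?]|[? _]]; auto; lia| tauto]. }
  assert (EB2 : B n = R).
  { apply pset_ext; intro x; unfold B; split; [intros [[? _]|[_ ?]]; auto; lia| tauto]. }
  assert (EB3 : forall k, (k > n)%nat -> B k = fun _ => False).
  { intros k Hk; apply pset_ext; intro x; unfold B; split; [intros [[? _]|[? _]]; lia| tauto]. }
  assert (HB : forall k, Borel (B k)).
  { intro k. destruct (Compare_dec.lt_dec k n) as [Hk|Hk]; [rewrite EB1; auto; apply HA; auto|].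
    destruct (Nat.eq_dec k n) as [Hk'|Hk']; [subst; rewrite EB2; auto|].
    rewrite EB3 by lia. apply Borel_empty. }
  assert (Hd : disjoint_family B).
  { intros i j x Hij Hi Hj. unfold B, R in *.
    destruct Hi as [[Hi Hi']|[Hi [_ Hi']]]; destruct Hj as [[Hj Hj']|[Hj [_ Hj']]].
    - exact (Hdis i j x Hi Hj Hij Hi' Hj').
    - apply Hj'; eauto.
    - apply Hi'; eauto.
    - lia. }
  specialize (Hadd B HB Hd).
  replace (fun x => exists k, B k x) with D in Hadd.
  2:{ apply pset_ext; intro x; split.
      - intro Hx. destruct (classic (exists i, (i < n)%nat /\ A i x)) as [[i [Hi Hi']]|Hn].
        + exists i; left; auto.
        + exists n; right; split; auto; split; auto.
      - intros [k [[Hk Hk']|[_ [Hk _]]]]; auto. apply (HA k Hk); auto. }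
  rewrite H1 in Hadd.
  symmetry. apply (lim_const _ _ n _ Hadd).
  intros m Hm. rewrite sum_f_rsum. rewrite (rsum_tail (S n)).
  - simpl. rewrite EB2. f_equal. apply rsum_ext. intros i Hi. rewrite EB1; auto.
  - intros k Hk. rewrite EB3 by lia. eapply nu_empty; eauto.
  - lia.
Qed.

Lemma null_or_nonempty D nu A : borel_prob_on D nu -> (exists x, A x) \/ nu A = 0.
Proof.
  intros Hnu. destruct (classic (exists x, A x)) as [H|H]; [left; auto|right].
  replace A with (fun _ : pt => False). { eapply nu_empty; eauto. }
  apply pset_ext; intro x; split; [tauto|intro Hx; apply H; eauto].
Qed.

Lemma rsum_zero n : rsum n (fun _ => 0) = 0.
Proof. induction n; simpl; auto. rewrite IHn; ring. Qed.

Lemma div_le_l x y a : 0 < a -> x <= y * a -> x / a <= y.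
Proof. intros Ha H. replace y with ((y * a) / a) by (field; lra).
  unfold Rdiv. apply Rmult_le_compat_r; auto. left; apply Rinv_0_lt_compat; auto. Qed.

Lemma zero_part D nu g L : borel_prob_on D nu -> (forall x, D x -> g x <= 0) ->
  is_lub (simple_below D nu (fun x => Rmax (g x) 0)) L -> L = 0.
Proof.
  intros Hnu Hg [Hub Hl].
  assert (0 <= L).
  { apply Hub. exists 0%nat, (fun _ _ => False), (fun _ => 0). repeat split; intros; try lia. }
  assert (L <= 0); [|lra].
  apply Hl. intros v [n [A [c [Hc [Hdis Hv]]]]]. subst v.
  rewrite <- (rsum_zero n). apply rsum_le. intros i Hi.
  destruct (Hc i Hi) as [HB [Hc0 Hx]].
  destruct (null_or_nonempty D nu (A i) Hnu) as [[x Ax]|H0].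
  - destruct (Hx x Ax) as [Dx Hcx]. rewrite Rmax_right in Hcx by (apply Hg; auto).
    replace (c i) with 0 by lra; lra.
  - rewrite H0; lra.
Qed.

Lemma lower_const D nu g c L : borel_prob_on D nu -> Borel D -> 0 <= c ->
  (forall x, D x -> c <= g x) -> is_lub (simple_below D nu g) L -> c <= L.
Proof.
  intros Hnu HD Hc Hg [Hub _]. apply Hub.
  exists 1%nat, (fun _ => D), (fun _ => c). split; [|split].
  - intros i Hi. split; auto.
  - intros i j x Hi Hj; lia.
  - simpl. destruct Hnu as [_ [H1 _]]. rewrite H1. ring.
Qed.

Section Key.
Variables mum mup sm sp : R.
Hypotheses (Hmum : 0 < mum) (Hmu : mum < mup) (Hsm : 0 < sm) (Hs : sm < sp).
Let D := Dset mum mup sm sp.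
Let a := mup + mum.
Let b := mup * mum - sp ^ 2.

Lemma key nu g k J : borel_prob_on D nu -> 0 < k -> (forall x, D x -> g x = k * fst x) ->
  is_lub (simple_below D nu g) J ->
  is_upper_bound (simple_below D nu (fun x => Rmax (fst x ^ 2 + snd x ^ 2) 0)) (a * J / k - b).
Proof.
  intros Hnu Hk Hg [HJ _] v [n [A [c [Hc [Hdis Hv]]]]].
  assert (HD : Borel D) by apply Borel_D.
  assert (Ha : 0 < a) by (unfold a; lra).
  destruct (partition D nu n A Hnu HD) as [HR [HRpos Hsum]].
  { intros i Hi; destruct (Hc i Hi) as [? [? Hx]]; split; auto. intros x Ax; apply Hx; auto. }
  { auto. }
  set (R := fun x => D x /\ ~ (exists i, (i < n)%nat /\ A i x)) in *.
  set (d := fun i => k * Rmax ((c i + b) / a) mum).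
  assert (Hpt : forall x, D x -> fst x ^ 2 + snd x ^ 2 <= a * fst x - b).
  { intros x [[H1 H2] [H3 H4]]. unfold a, b. nra. }
  assert (Hcd : forall i x, (i < n)%nat -> A i x -> D x /\ c i <= a * fst x - b).
  { intros i x Hi Ax. destruct (Hc i Hi) as [_ [Hc0 Hx]]. destruct (Hx x Ax) as [Dx Hcx].
    split; auto. rewrite Rmax_left in Hcx.
    - pose proof (Hpt x Dx); lra.
    - destruct Dx as [[? ?] [? ?]]. nra. }
  set (A' := fun i => if Nat.ltb i n then A i else R).
  set (c' := fun i => if Nat.ltb i n then d i else k * mum).
  assert (Hw : rsum (S n) (fun i => c' i * nu (A' i)) <= J).
  { apply HJ. exists (S n), A', c'. split; [|split]; auto.
    - intros i Hi. unfold A', c'. destruct (Nat.ltb i n) eqn:E.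
      + apply Nat.ltb_lt in E. destruct (Hc i E) as [HB _]. split; auto. split.
        * unfold d. pose proof (Rmax_r ((c i + b) / a) mum). nra.
        * intros x Ax. destruct (Hcd i x E Ax) as [Dx Hcx]. split; auto.
          rewrite Hg by auto. unfold d. apply Rmult_le_compat_l; [lra|].
          apply Rmax_lub.
          -- apply div_le_l; auto. lra.
          -- destruct Dx as [[? ?] _]; auto.
      + split; auto. split; [nra|]. intros x [Dx Hx]. split; auto.
        rewrite Hg by auto. destruct Dx as [[? ?] _]. nra.
    - intros i j x Hi Hj Hij. unfold A'.
      destruct (Nat.ltb i n) eqn:Ei; destruct (Nat.ltb j n) eqn:Ej.
      + apply Nat.ltb_lt in Ei, Ej. eapply Hdis; eauto.
      + apply Nat.ltb_lt in Ei. intros Ax [_ H]. apply H; eauto.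
      + apply Nat.ltb_lt in Ej. intros [_ H] Ax. apply H; eauto.
      + apply Nat.ltb_ge in Ei, Ej. lia. }
  simpl in Hw. rewrite (rsum_ext n _ (fun i => d i * nu (A i))) in Hw.
  2:{ intros i Hi. unfold A', c'. replace (Nat.ltb i n) with true; auto. symmetry; apply Nat.ltb_lt; auto. }
  unfold A', c' in Hw. rewrite Nat.ltb_irrefl in Hw.
  assert (Hv2 : v <= rsum n (fun i => (a / k) * (d i * nu (A i)) + (- b) * nu (A i))).
  { subst v. apply rsum_le. intros i Hi.
    destruct (Hc i Hi) as [HB _].
    pose proof Hnu as [Hpos _].
    destruct (null_or_nonempty D nu (A i) Hnu) as [[x Ax]|H0].
    - destruct (Hcd i x Hi Ax) as [_ Hcx].
      assert (c i <= a / k * d i - b).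
      { unfold d. replace (a / k * (k * Rmax ((c i + b) / a) mum)) with (a * Rmax ((c i + b) / a) mum) by (field; lra).
        pose proof (Rmax_l ((c i + b) / a) mum).
        assert (a * ((c i + b) / a) = c i + b) by (field; lra). nra. }
      pose proof (Hpos (A i) HB). nra.
    - rewrite H0; lra. }
  rewrite rsum_plus, rsum_scal, rsum_scal in Hv2.
  set (S1 := rsum n (fun i => d i * nu (A i))) in *.
  set (S2 := rsum n (fun i => nu (A i))) in *.
  replace (a * J / k) with (a / k * J) by (field; lra).
  assert (Hq : 0 < a / k) by (apply Rdiv_lt_0_compat; auto).
  assert (a / k * S1 <= a / k * (J - k * mum * nu R)) by (apply Rmult_le_compat_l; lra).
  replace (a / k * (J - k * mum * nu R)) with (a / k * J - a * mum * nu R) in H by (field; lra).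
  assert (a * mum - b >= 0) by (unfold a, b; nra).
  nra.
Qed.
End Key.

Lemma frac_le x y z w : 0 < y -> 0 < w -> x * w <= z * y -> x / y <= z / w.
Proof.
  intros Hy Hw H.
  replace (x / y) with ((x * w) * / (y * w)) by (field; lra).
  replace (z / w) with ((z * y) * / (y * w)) by (field; lra).
  apply Rmult_le_compat_r; auto. left; apply Rinv_0_lt_compat; nra.
Qed.

Section Lower.
Variables mum mup sm sp h0 : R.
Hypotheses (Hmum : 0 < mum) (Hmu : mum < mup) (Hsm : 0 < sm) (Hs : sm < sp).
Let D := Dset mum mup sm sp.
Let a := mup + mum.
Let b := mup * mum - sp ^ 2.

Lemma I2_bounds nu I2 : borel_prob_on D nu ->
  is_integral D nu (fun p => fst p ^ 2 + snd p ^ 2) I2 ->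
  mum ^ 2 <= I2 /\ forall g k J, 0 < k -> (forall x, D x -> g x = k * fst x) ->
     is_lub (simple_below D nu g) J -> I2 <= a * J / k - b.
Proof.
  intros Hnu [Ip [In [HIp [HIn E]]]].
  assert (In = 0).
  { apply (zero_part D nu (fun x => - (fst x ^ 2 + snd x ^ 2)) In Hnu); [intros; nra|exact HIn]. }
  subst I2. split.
  - assert (mum ^ 2 <= Ip); [|lra].
    eapply lower_const; eauto. apply Borel_D. nra.
    intros x [[? ?] [? ?]]. apply Rle_trans with (fst x ^ 2 + snd x ^ 2); [nra|apply Rmax_l].
  - intros g k J Hk Hg HJ. assert (Ip <= a * J / k - b); [|lra].
    apply HIp. eapply key; eauto.
Qed.

Lemma I1_repr nu I1 : borel_prob_on D nu -> h0 <> 0 ->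
  is_integral D nu (fun p => h0 * fst p) I1 ->
  exists g k J, 0 < k /\ (forall x, D x -> g x = k * fst x) /\
     is_lub (simple_below D nu g) J /\ I1 = h0 * (J / k) /\ mum <= J / k.
Proof.
  intros Hnu Hh [Ip [In [HIp [HIn E]]]].
  destruct (Rlt_dec 0 h0) as [Hp|Hn].
  - assert (Hz0 : In = 0).
    { apply (zero_part D nu (fun x => - (h0 * fst x)) In Hnu); [|exact HIn]. intros [x y] [[? ?] _]. simpl in *. nra. }
    exists (fun x => Rmax (h0 * fst x) 0), h0, Ip. split; auto. split.
    { intros [x y] [[? ?] _]. simpl in *. rewrite Rmax_left by nra. ring. }
    split; auto. split; [rewrite E, Hz0; field; lra|].
    apply Rmult_le_reg_r with h0; auto. replace (Ip / h0 * h0) with Ip by (field; lra).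
    eapply lower_const; eauto. apply Borel_D. nra.
    intros [x y] [[? ?] _]. simpl in *. apply Rle_trans with (h0 * x); [nra|apply Rmax_l].
  - assert (Hn' : h0 < 0) by lra.
    assert (Hz0 : Ip = 0).
    { apply (zero_part D nu (fun x => (h0 * fst x)) Ip Hnu); [|exact HIp]. intros [x y] [[? ?] _]. simpl in *. nra. }
    exists (fun x => Rmax (- (h0 * fst x)) 0), (- h0), In. split; [lra|]. split.
    { intros [x y] [[? ?] _]. simpl in *. rewrite Rmax_left by nra. ring. }
    split; auto. split; [rewrite E, Hz0; field; lra|].
    apply Rmult_le_reg_r with (- h0); [lra|]. replace (In / - h0 * - h0) with In by (field; lra).
    eapply lower_const; eauto. apply Borel_D. nra.
    intros [x y] [[? ?] _]. simpl in *. apply Rle_trans with (- (h0 * x)); [nra|apply Rmax_l].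
Qed.

Lemma final_ineq m I2 (V : R) :
  mum <= m -> mum ^ 2 <= I2 -> I2 <= a * m - b ->
  V = (if Rle_dec (mup * mum - 2 * sp ^ 2) (mum ^ 2)
           then h0 ^ 2 * mum ^ 2 / (mum ^ 2 + sp ^ 2)
           else (mup * mum - sp ^ 2) / ((mup + mum) / 2) ^ 2 * h0 ^ 2) ->
  V <= (h0 * m) ^ 2 / I2.
Proof.
  intros Hm H1 H2 HV.
  assert (HI : 0 < I2) by nra.
  apply Rle_trans with ((h0 * m) ^ 2 / (a * m - b)).
  2:{ apply frac_le; try lra. apply Rmult_le_compat_l; [nra|lra]. }
  destruct (Rle_dec (mup * mum - 2 * sp ^ 2) (mum ^ 2)) as [Hc|Hc]; subst V.
  - apply frac_le; [nra|lra|].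
    assert (G1 : mum*(mum^2 + 2*sp^2 - mup*mum) >= 0) by (apply Rle_ge, Rmult_le_pos; lra).
    assert (G2 : (mum^2+sp^2)*(m-mum) >= 0) by (apply Rle_ge, Rmult_le_pos; nra).
    assert (F1 : (mum^2+sp^2)*(m+mum) - a*mum^2 >= 0).
    { replace ((mum^2+sp^2)*(m+mum) - a*mum^2) with ((mum^2+sp^2)*(m-mum) + mum*(mum^2 + 2*sp^2 - mup*mum)) by (unfold a; ring). lra. }
    assert (E : m^2*(mum^2+sp^2) - mum^2*(a*m-b) = (m - mum)*((mum^2+sp^2)*(m+mum) - a*mum^2))
      by (unfold a, b; ring).
    assert (m^2*(mum^2+sp^2) - mum^2*(a*m-b) >= 0) by nra.
    assert (h0 ^ 2 >= 0) by nra. nra.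
  - replace ((mup * mum - sp ^ 2) / ((mup + mum) / 2) ^ 2 * h0 ^ 2) with ((4 * b * h0 ^ 2) / a ^ 2)
      by (unfold a, b; field; lra).
    apply frac_le; [unfold a; nra|lra|].
    assert (h0 ^ 2 * (a * m - 2 * b) ^ 2 >= 0) by (apply Rle_ge, Rmult_le_pos; apply pow2_ge_0).
    assert (E : (h0 * m) ^ 2 * a ^ 2 - 4 * b * h0 ^ 2 * (a * m - b) = h0 ^ 2 * (a * m - 2 * b) ^ 2) by ring.
    lra.
Qed.

Lemma lower_part nu I1 I2 (V : R) : borel_prob_on D nu ->
  is_integral D nu (fun p => h0 * fst p) I1 ->
  is_integral D nu (fun p => fst p ^ 2 + snd p ^ 2) I2 ->
  V = (if Rle_dec (mup * mum - 2 * sp ^ 2) (mum ^ 2)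
           then h0 ^ 2 * mum ^ 2 / (mum ^ 2 + sp ^ 2)
           else (mup * mum - sp ^ 2) / ((mup + mum) / 2) ^ 2 * h0 ^ 2) ->
  V <= I1 ^ 2 / I2.
Proof.
  intros Hnu H1 H2 HV.
  destruct (I2_bounds nu I2 Hnu H2) as [Hlo Hup].
  destruct (Req_dec h0 0) as [Hz|Hz].
  - assert (V = 0) by (subst V h0; destruct Rle_dec; field; nra).
    rewrite H. unfold Rdiv. apply Rmult_le_pos; [nra|]. left; apply Rinv_0_lt_compat; nra.
  - destruct (I1_repr nu I1 Hnu Hz H1) as [g [k [J [Hk [Hg [HJ [E Hm]]]]]]].
    rewrite E. apply final_ineq; auto.
    replace (a * (J / k)) with (a * J / k) by (field; lra). eapply Hup; eauto.
Qed.
End Lower.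

Definition ind (A : pset) (x : pt) : R := if excluded_middle_informative (A x) then 1 else 0.

Lemma ind_true A x : A x -> ind A x = 1.
Proof. intro H; unfold ind; destruct excluded_middle_informative; tauto. Qed.
Lemma ind_false A x : ~ A x -> ind A x = 0.
Proof. intro H; unfold ind; destruct excluded_middle_informative; tauto. Qed.
Lemma ind_pos A x : 0 <= ind A x.
Proof. unfold ind; destruct excluded_middle_informative; lra. Qed.

Definition mix (p : R) (x1 x2 : pt) : pset -> R := fun A => p * ind A x1 + (1 - p) * ind A x2.

Lemma ind_partial (A : nat -> pset) x : disjoint_family A ->
  exists N, forall n, (n >= N)%nat -> sum_f_R0 (fun k => ind (A k) x) n = ind (fun y => exists k, A k y) x.
Proof.
  intros Hd. destruct (classic (exists k, A k x)) as [[k0 Hk0]|Hno].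
  - exists k0. rewrite ind_true by eauto.
    assert (Hs : forall k, k <> k0 -> ind (A k) x = 0).
    { intros k Hk. apply ind_false. intro H. exact (Hd k k0 x Hk H Hk0). }
    assert (P : forall n, ((n < k0)%nat -> sum_f_R0 (fun k => ind (A k) x) n = 0) /\
                          ((n >= k0)%nat -> sum_f_R0 (fun k => ind (A k) x) n = 1)).
    { induction n as [|n IH]; simpl.
      - split; intro H.
        + apply Hs; lia.
        + assert (k0 = 0%nat) by lia. subst. apply ind_true; auto.
      - destruct IH as [IH1 IH2]. split; intro H.
        + rewrite IH1 by lia. rewrite Hs by lia. ring.
        + destruct (Nat.eq_dec (S n) k0) as [E|E].
          * rewrite IH1 by lia. subst. rewrite ind_true; auto. ring.
          * rewrite IH2 by lia. rewrite Hs by lia. ring. }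
    intros n Hn. apply P; auto.
  - exists 0%nat. intros n _. rewrite ind_false by auto.
    induction n; simpl.
    + apply ind_false. intro H; apply Hno; eauto.
    + rewrite IHn. rewrite ind_false by (intro H; apply Hno; eauto). ring.
Qed.

Lemma sum_lin p q f g n : sum_f_R0 (fun k => p * f k + q * g k) n = p * sum_f_R0 f n + q * sum_f_R0 g n.
Proof. induction n; simpl; [ring|]. rewrite IHn; ring. Qed.

Lemma inf_sum_ev s l : (exists N, forall n, (n >= N)%nat -> sum_f_R0 s n = l) -> infinite_sum s l.
Proof. intros [N HN] eps He. exists N. intros n Hn. rewrite HN by auto. unfold Rdist. rewrite Rminus_diag, Rabs_R0. lra. Qed.

Lemma mix_prob D p x1 x2 : 0 <= p <= 1 -> D x1 -> D x2 -> borel_prob_on D (mix p x1 x2).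
Proof.
  intros Hp H1 H2. unfold mix. split; [|split].
  - intros A _. pose proof (ind_pos A x1). pose proof (ind_pos A x2). nra.
  - rewrite !ind_true by auto. ring.
  - intros A _ Hd. apply inf_sum_ev.
    destruct (ind_partial A x1 Hd) as [N1 HN1]. destruct (ind_partial A x2 Hd) as [N2 HN2].
    exists (max N1 N2). intros n Hn.
    rewrite (sum_lin p (1 - p) (fun k => ind (A k) x1) (fun k => ind (A k) x2)).
    rewrite HN1, HN2 by lia. auto.
Qed.

Lemma rsum_ind n (A : nat -> pset) c x :
  (forall i j, (i < n)%nat -> (j < n)%nat -> i <> j -> A i x -> A j x -> False) ->
  rsum n (fun i => c i * ind (A i) x) = 0 \/
  exists i, (i < n)%nat /\ A i x /\ rsum n (fun i => c i * ind (A i) x) = c i.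
Proof.
  induction n; intros Hd; simpl; [left; auto|].
  destruct IHn as [H|[i [Hi [Ai H]]]]; [intros i j Hi Hj; apply Hd; lia|..].
  - destruct (classic (A n x)) as [An|An].
    + right. exists n. split; [lia|]. split; auto. rewrite H, ind_true; auto; ring.
    + left. rewrite H, ind_false; auto; ring.
  - right. exists i. split; [lia|]. split; auto. rewrite H, ind_false; [ring|].
    intro An. apply (Hd i n); auto; lia.
Qed.

Lemma rsum_ind_le D n (A : nat -> pset) c x g :
  (forall i j, (i < n)%nat -> (j < n)%nat -> i <> j -> A i x -> A j x -> False) ->
  (forall i, (i < n)%nat -> forall y, A i y -> D y /\ c i <= g y) -> 0 <= g x ->
  rsum n (fun i => c i * ind (A i) x) <= g x.
Proof.
  intros Hd Hc Hg. destruct (rsum_ind n A c x Hd) as [H|[i [Hi [Ai H]]]]; rewrite H; auto.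
  apply (Hc i Hi x Ai).
Qed.

Lemma mix_lub D p x1 x2 g : 0 <= p <= 1 -> D x1 -> D x2 -> x1 <> x2 ->
  (forall x, 0 <= g x) ->
  is_lub (simple_below D (mix p x1 x2) g) (p * g x1 + (1 - p) * g x2).
Proof.
  intros Hp H1 H2 H12 Hg. split.
  - intros v [n [A [c [Hc [Hdis Hv]]]]]. subst v. unfold mix.
    rewrite (rsum_ext n _ (fun i => p * (c i * ind (A i) x1) + (1 - p) * (c i * ind (A i) x2)))
      by (intros; ring).
    rewrite rsum_plus, !rsum_scal.
    assert (Hc' : forall i, (i < n)%nat -> forall y, A i y -> D y /\ c i <= g y)
      by (intros i Hi; apply Hc; auto).
    pose proof (rsum_ind_le D n A c x1 g (fun i j => Hdis i j x1) Hc' (Hg x1)).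
    pose proof (rsum_ind_le D n A c x2 g (fun i j => Hdis i j x2) Hc' (Hg x2)).
    nra.
  - intros bnd Hb. apply Hb.
    exists 2%nat, (fun i => match i with O => (fun y => y = x1) | _ => (fun y => y = x2) end),
      (fun i => match i with O => g x1 | _ => g x2 end).
    split; [|split].
    + intros [|[|i]] Hi; try lia; (split; [apply Borel_single|split; [apply Hg|]]);
        intros y Hy; subst y; split; auto; lra.
    + intros [|[|i]] [|[|j]] x Hi Hj Hij; try lia; intros E1 E2; subst; auto.
    + simpl. unfold mix. rewrite (ind_true (fun y => y = x1) x1) by auto.
      rewrite (ind_true (fun y => y = x2) x2) by auto.
      rewrite (ind_false (fun y => y = x1) x2) by auto.
      rewrite (ind_false (fun y => y = x2) x1) by auto. ring.
Qed.

Lemma Rmax_id y : Rmax y 0 - Rmax (- y) 0 = y.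
Proof. unfold Rmax. destruct (Rle_dec y 0); destruct (Rle_dec (- y) 0); lra. Qed.

Lemma mix_integral D p x1 x2 f : 0 <= p <= 1 -> D x1 -> D x2 -> x1 <> x2 ->
  is_integral D (mix p x1 x2) f (p * f x1 + (1 - p) * f x2).
Proof.
  intros Hp H1 H2 H12.
  exists (p * Rmax (f x1) 0 + (1 - p) * Rmax (f x2) 0), (p * Rmax (- f x1) 0 + (1 - p) * Rmax (- f x2) 0).
  split; [|split].
  - apply (mix_lub D p x1 x2 (fun x => Rmax (f x) 0)); auto. intro; apply Rmax_r.
  - apply (mix_lub D p x1 x2 (fun x => Rmax (- f x) 0)); auto. intro; apply Rmax_r.
  - pose proof (Rmax_id (f x1)). pose proof (Rmax_id (f x2)). nra.
Qed.

Lemma sq_between u1 u2 t : 0 <= t <= 1 -> u2 ^ 2 <= u1 ^ 2 -> (t * u1 + (1 - t) * u2) ^ 2 <= u1 ^ 2.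
Proof.
  intros Ht H.
  assert (E : t * u1 ^ 2 + (1 - t) * u2 ^ 2 - (t * u1 + (1 - t) * u2) ^ 2 = t * (1 - t) * (u1 - u2) ^ 2) by ring.
  assert (0 <= t * (1 - t) * (u1 - u2) ^ 2) by (apply Rmult_le_pos; [nra|apply pow2_ge_0]).
  nra.
Qed.

Section PartC.
Variables mum mup sm sp h0 : R.
Hypotheses (Hmum : 0 < mum) (Hmu : mum < mup) (Hsm : 0 < sm) (Hs : sm < sp).
Let D := Dset mum mup sm sp.
Let a := mup + mum.
Let b := mup * mum - sp ^ 2.

Lemma max_bound ps : (h0 - ps * mup) ^ 2 <= (h0 - ps * mum) ^ 2 ->
  forall x, D x -> F h0 0 ps (fst x) (snd x) <= F h0 0 ps mum sp.
Proof.
  intros H [mu s] [[H1 H2] [H3 H4]]. simpl in *. unfold F.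
  set (t := (mup - mu) / (mup - mum)).
  assert (Ht : 0 <= t <= 1).
  { unfold t. split.
    - apply Rmult_le_pos; [lra|left; apply Rinv_0_lt_compat; lra].
    - apply div_le_l; lra. }
  replace (h0 - ps * mu) with (t * (h0 - ps * mum) + (1 - t) * (h0 - ps * mup)) by (unfold t; field; lra).
  pose proof (sq_between (h0 - ps * mum) (h0 - ps * mup) t Ht H).
  assert ((0 - ps * s) ^ 2 <= (0 - ps * sp) ^ 2).
  { replace ((0 - ps * s) ^ 2) with (ps ^ 2 * s ^ 2) by ring.
    replace ((0 - ps * sp) ^ 2) with (ps ^ 2 * sp ^ 2) by ring.
    apply Rmult_le_compat_l; [apply pow2_ge_0|nra]. }
  lra.
Qed.

Lemma partC :
  let pistar := if Rle_dec (mup * mum - 2 * sp ^ 2) (mum ^ 2)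
           then h0 * mum / (mum ^ 2 + sp ^ 2)
           else h0 / ((mup + mum) / 2) in
  exists m, is_max_F D h0 0 pistar m /\
     forall pi m', is_max_F D h0 0 pi m' -> pi <> pistar -> m < m'.
Proof.
  intros pistar.
  assert (Dx1 : D (mum, sp)) by (unfold D, Dset; simpl; lra).
  assert (Dx2 : D (mup, sp)) by (unfold D, Dset; simpl; lra).
  exists (F h0 0 pistar mum sp).
  assert (Hord : (h0 - pistar * mup) ^ 2 <= (h0 - pistar * mum) ^ 2).
  { unfold pistar; destruct Rle_dec as [Hc|Hc].
    - assert (Hs0 : 0 < mum ^ 2 + sp ^ 2) by nra.
      replace (h0 - h0 * mum / (mum ^ 2 + sp ^ 2) * mup) with (h0 / (mum ^ 2 + sp ^ 2) * ((mum ^ 2 + sp ^ 2) - mum * mup)) by (field; lra).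
      replace (h0 - h0 * mum / (mum ^ 2 + sp ^ 2) * mum) with (h0 / (mum ^ 2 + sp ^ 2) * sp ^ 2) by (field; lra).
      rewrite !Rpow_mult_distr.
      apply Rmult_le_compat_l; [apply pow2_ge_0|].
      assert (- sp ^ 2 <= (mum ^ 2 + sp ^ 2) - mum * mup <= sp ^ 2) by (split; nra).
      nra.
    - right. field. lra. }
  split; [split|].
  - exists (mum, sp); split; auto.
  - intros x Dx. apply max_bound; auto.
  - intros pi m' [_ Hm] Hne.
    pose proof (Hm _ Dx1) as M1. pose proof (Hm _ Dx2) as M2. simpl in M1, M2.
    assert (Hd : 0 < (pi - pistar) ^ 2) by (replace ((pi - pistar) ^ 2) with (Rsqr (pi - pistar)) by (unfold Rsqr; ring); apply Rsqr_pos_lt; lra).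
    unfold pistar in *; destruct Rle_dec as [Hc|Hc].
    + assert (E : F h0 0 pi mum sp - F h0 0 (h0 * mum / (mum ^ 2 + sp ^ 2)) mum sp
                  = (mum ^ 2 + sp ^ 2) * (pi - h0 * mum / (mum ^ 2 + sp ^ 2)) ^ 2)
        by (unfold F; field; nra).
      assert (0 < (mum ^ 2 + sp ^ 2) * (pi - h0 * mum / (mum ^ 2 + sp ^ 2)) ^ 2)
        by (apply Rmult_lt_0_compat; nra).
      lra.
    + set (M := 2 * b / a). set (lam := (mup - M) / (mup - mum)).
      assert (Ha : 0 < a) by (unfold a; lra).
      assert (Hb : 0 < b) by (unfold b; nra).
      assert (HM1 : mum <= M).
      { unfold M. apply Rmult_le_reg_r with a; auto. replace (2 * b / a * a) with (2 * b) by (field; lra).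
        unfold a, b; nra. }
      assert (HM2 : M <= mup).
      { unfold M. apply div_le_l; auto. unfold a, b; nra. }
      assert (Hl : 0 <= lam <= 1).
      { unfold lam. split.
        - apply Rmult_le_pos; [lra|left; apply Rinv_0_lt_compat; lra].
        - apply div_le_l; lra. }
      assert (E : lam * F h0 0 pi mum sp + (1 - lam) * F h0 0 pi mup sp
                  - F h0 0 (h0 / ((mup + mum) / 2)) mum sp
                  = b * (pi - h0 / ((mup + mum) / 2)) ^ 2).
      { unfold lam, M, F. unfold a, b in *. field. lra. }
      assert (0 < b * (pi - h0 / ((mup + mum) / 2)) ^ 2) by (apply Rmult_lt_0_compat; auto).
      nra.
Qed.
End PartC.

Theorem mainTheorem8 (mum mup sm sp h0 h1 : R)
  (Hmum : 0 < mum) (Hmu : mum < mup) (Hsm : 0 < sm) (Hs : sm < sp)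
  (Hh1 : h1 = 0) :
  let D := Dset mum mup sm sp in
  let muM := (mup + mum) / 2 in
  let V := if Rle_dec (mup * mum - 2 * sp ^ 2) (mum ^ 2)
           then h0 ^ 2 * mum ^ 2 / (mum ^ 2 + sp ^ 2)
           else (mup * mum - sp ^ 2) / muM ^ 2 * h0 ^ 2 in
  let pistar := if Rle_dec (mup * mum - 2 * sp ^ 2) (mum ^ 2)
           then h0 * mum / (mum ^ 2 + sp ^ 2)
           else h0 / muM in
  (* the minimum over Borel probability measures nu on D equals V *)
  ((forall nu I1 I2, borel_prob_on D nu ->
      is_integral D nu (fun p => h0 * fst p) I1 ->
      is_integral D nu (fun p => fst p ^ 2 + snd p ^ 2) I2 ->
      V <= I1 ^ 2 / I2) /\
   (exists nu I1 I2, borel_prob_on D nu /\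
      is_integral D nu (fun p => h0 * fst p) I1 /\
      is_integral D nu (fun p => fst p ^ 2 + snd p ^ 2) I2 /\
      I1 ^ 2 / I2 = V)) /\
  (* pistar is the unique minimizer of pi |-> max_D F(pi, ., .) *)
  (exists m, is_max_F D h0 h1 pistar m /\
     forall pi m', is_max_F D h0 h1 pi m' -> pi <> pistar -> m < m').
Proof.
  intros D muM V pistar. subst h1.
  split; [split|].
  - intros nu I1 I2 Hnu H1 H2. apply (lower_part mum mup sm sp h0 Hmum Hmu Hsm Hs nu I1 I2 V Hnu H1 H2). reflexivity.
  - assert (Dx1 : D (mum, sp)) by (unfold D, Dset; simpl; lra).
    assert (Dx2 : D (mup, sp)) by (unfold D, Dset; simpl; lra).
    assert (Hne : (mum, sp) <> (mup, sp)) by (intro E; injection E; lra).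
    unfold V, muM; destruct Rle_dec as [Hc|Hc].
    + exists (mix 1 (mum, sp) (mup, sp)),
        (1 * (h0 * mum) + (1 - 1) * (h0 * mup)),
        (1 * (mum ^ 2 + sp ^ 2) + (1 - 1) * (mup ^ 2 + sp ^ 2)).
      split; [apply mix_prob; auto; lra|].
      split; [apply (mix_integral D 1 (mum, sp) (mup, sp) (fun p => h0 * fst p)); auto; lra|].
      split; [apply (mix_integral D 1 (mum, sp) (mup, sp) (fun p => fst p ^ 2 + snd p ^ 2)); auto; lra|].
      field. nra.
    + set (a := mup + mum). set (b := mup * mum - sp ^ 2).
      set (M := 2 * b / a). set (lam := (mup - M) / (mup - mum)).
      assert (Ha : 0 < a) by (unfold a; lra).
      assert (Hb : 0 < b) by (unfold b; nra).
      assert (HM1 : mum <= M).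
      { unfold M. apply Rmult_le_reg_r with a; auto. replace (2 * b / a * a) with (2 * b) by (field; lra).
        unfold a, b; nra. }
      assert (HM2 : M <= mup).
      { unfold M. apply div_le_l; auto. unfold a, b; nra. }
      assert (Hl : 0 <= lam <= 1).
      { unfold lam. split.
        - apply Rmult_le_pos; [lra|left; apply Rinv_0_lt_compat; lra].
        - apply div_le_l; lra. }
      exists (mix lam (mum, sp) (mup, sp)),
        (lam * (h0 * mum) + (1 - lam) * (h0 * mup)),
        (lam * (mum ^ 2 + sp ^ 2) + (1 - lam) * (mup ^ 2 + sp ^ 2)).
      split; [apply mix_prob; auto|].
      split; [apply (mix_integral D lam (mum, sp) (mup, sp) (fun p => h0 * fst p)); auto|].
      split; [apply (mix_integral D lam (mum, sp) (mup, sp) (fun p => fst p ^ 2 + snd p ^ 2)); auto|].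
      assert (E1 : lam * (h0 * mum) + (1 - lam) * (h0 * mup) = h0 * M) by (unfold lam; field; lra).
      assert (E2 : lam * (mum ^ 2 + sp ^ 2) + (1 - lam) * (mup ^ 2 + sp ^ 2) = b)
        by (unfold lam, M, a, b in *; field; lra).
      rewrite E1, E2. unfold M. fold b a. field. split; lra.
  - apply (partC mum mup sm sp h0); auto.
Qed.
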